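(* Let $P$ be a set of $n$ points in $\mathbb{R}^d$ and let $P_1,\dots,P_j\subseteq P$ be pairwise disjoint nonempty subsets. Let $o_l$ be a median point of $P_l$ ($1\le l\le j$), $o$ a median point of $P$, and $\mathcal{F}$ the affine flat spanned by $\{o_1,\dots,o_j\}$. Suppose $|P\setminus\bigcup_{l=1}^jP_l|\le\epsilon|P|$ for some $\epsilon\in(0,1/5)$, and each $P_l$ is contained in the ball $\mathcal{B}(o_l,L)$ of center $o_l$ and radius $L\ge0$. Then one can construct, from $o_1,\dots,o_j$, $L$ and $\epsilon$ alone, a grid $G\subset\mathcal{F}$ of size $O\big(j^2(\frac{j\sqrt j}{\epsilon})^j\big)$ such that at least one grid point $\tau\in G$ satisfies $$\frac1{|P|}\sum_{p\in P}\|\tau-p\|\le\Big(1+\frac94\epsilon\Big)\frac1{|P|}\sum_{p\in P}\|p-o\|+(1+\epsilon)L.$$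
   Context: A median point of a finite set $X\subset\mathbb{R}^d$ is a point $x\in\mathbb{R}^d$ minimizing $\sum_{p\in X}\|p-x\|$ (geometric median). The implied constant in the $O$-bound may depend on $j$. *)

(* Defs.v *)
From HB Require Import structures.
From mathcomp Require Import all_boot all_order all_algebra.
From mathcomp Require Import finmap.
From mathcomp Require Import reals.
Set Implicit Arguments. Unset Strict Implicit. Unset Printing Implicit Defensive.
Import Order.TTheory GRing.Theory Num.Theory.
Local Open Scope ring_scope.
Local Open Scope fset_scope.

Definition eucl (R : realType) (d : nat) (x : 'rV[R]_d) : R :=
  Num.sqrt (\sum_(i < d) (x ord0 i) ^+ 2).

Definition dist_sum (R : realType) (d : nat) (X : {fset 'rV[R]_d}) (x : 'rV[R]_d) : R :=
  \sum_(p <- X) eucl (p - x).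

Definition is_median (R : realType) (d : nat) (X : {fset 'rV[R]_d}) (o : 'rV[R]_d) : Prop :=
  forall x : 'rV[R]_d, dist_sum X o <= dist_sum X x.

Definition in_affine_span (R : realType) (d j : nat) (os : 'I_j -> 'rV[R]_d)
  (x : 'rV[R]_d) : Prop :=
  exists c : 'I_j -> R, \sum_(l < j) c l = 1 /\ x = \sum_(l < j) c l *: os l.

(* Main.v *)
Require Import Defs.
From HB Require Import structures.
From mathcomp Require Import all_boot all_order all_algebra.
From mathcomp Require Import finmap.
From mathcomp Require Import reals.
From mathcomp.algebra_tactics Require Import ring lra.
From mathcomp Require Import zify.
Import Order.TTheory GRing.Theory Num.Theory.
Local Open Scope ring_scope.
Set Implicit Arguments. Unset Strict Implicit. Unset Printing Implicit Defensive.

Section Dot.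
Variables (R : realType) (d : nat).
Local Notation V := 'rV[R]_d.

Definition dot (x y : V) : R := \sum_(i < d) x ord0 i * y ord0 i.

Lemma dotC x y : dot x y = dot y x.
Proof. by apply: eq_bigr => i _; rewrite mulrC. Qed.
Lemma dotDl x y z : dot (x + y) z = dot x z + dot y z.
Proof. by rewrite /dot -big_split; apply: eq_bigr => i _; rewrite !mxE mulrDl. Qed.
Lemma dotDr x y z : dot z (x + y) = dot z x + dot z y.
Proof. by rewrite dotC dotDl !(dotC z). Qed.
Lemma dotZl a x y : dot (a *: x) y = a * dot x y.
Proof. by rewrite /dot mulr_sumr; apply: eq_bigr => i _; rewrite !mxE mulrA. Qed.
Lemma dotZr a x y : dot y (a *: x) = a * dot y x.
Proof. by rewrite dotC dotZl dotC. Qed.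
Lemma dotNl x y : dot (- x) y = - dot x y.
Proof. by rewrite -scaleN1r dotZl mulN1r. Qed.
Lemma dotNr x y : dot y (- x) = - dot y x.
Proof. by rewrite dotC dotNl dotC. Qed.
Lemma dotBl x y z : dot (x - y) z = dot x z - dot y z.
Proof. by rewrite dotDl dotNl. Qed.
Lemma dotBr x y z : dot z (x - y) = dot z x - dot z y.
Proof. by rewrite dotDr dotNr. Qed.
Lemma dot0l x : dot 0 x = 0.
Proof. by rewrite /dot big1 // => i _; rewrite mxE mul0r. Qed.
Lemma dot0r x : dot x 0 = 0.
Proof. by rewrite dotC dot0l. Qed.
Lemma dot_suml (I : Type) (r : seq I) (P : pred I) (F : I -> V) y :
  dot (\sum_(i <- r | P i) F i) y = \sum_(i <- r | P i) dot (F i) y.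
Proof.
elim/big_rec2: _ => [|i a b _ <-]; first by rewrite dot0l.
by rewrite dotDl.
Qed.
Lemma dot_sumr (I : Type) (r : seq I) (P : pred I) (F : I -> V) y :
  dot y (\sum_(i <- r | P i) F i) = \sum_(i <- r | P i) dot y (F i).
Proof. by rewrite dotC dot_suml; apply: eq_bigr => i _; rewrite dotC. Qed.
Lemma dotxx_ge0 x : 0 <= dot x x.
Proof. by apply: sumr_ge0 => i _; rewrite -expr2 sqr_ge0. Qed.
Lemma dotxx_eq0 x : dot x x = 0 -> x = 0.
Proof.
move=> /eqP; rewrite psumr_eq0 => [/allP H|i _]; last by rewrite -expr2 sqr_ge0.
apply/rowP => i; rewrite mxE; apply/eqP.
have := H i (mem_index_enum _); by rewrite -expr2 sqrf_eq0.
Qed.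

Definition nrm (x : V) := eucl x.
Lemma nrmE x : nrm x = Num.sqrt (dot x x).
Proof. by rewrite /nrm /eucl /dot; congr Num.sqrt; apply: eq_bigr => i _; rewrite expr2. Qed.
Lemma nrm_ge0 x : 0 <= nrm x.
Proof. by rewrite nrmE sqrtr_ge0. Qed.
Lemma nrm_sq x : nrm x ^+ 2 = dot x x.
Proof. by rewrite nrmE sqr_sqrtr // dotxx_ge0. Qed.
Lemma nrm_le x b : 0 <= b -> dot x x <= b ^+ 2 -> nrm x <= b.
Proof.
move=> b0 h; rewrite -(ler_pXn2r (n:=2)) // ?nrm_ge0 // ?nrm_sq //.
by rewrite nnegrE nrm_ge0.
Qed.
Lemma nrmN x : nrm (- x) = nrm x.
Proof. by rewrite !nrmE dotNl dotNr opprK. Qed.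
Lemma nrmB x y : nrm (x - y) = nrm (y - x).
Proof. by rewrite -nrmN opprB. Qed.

Lemma CS x y : dot x y <= nrm x * nrm y.
Proof.
have [x0|xn0] := eqVneq (nrm x) 0.
  have : dot x x = 0 by rewrite -nrm_sq x0 expr2 mul0r.
  by move/dotxx_eq0 => ->; rewrite dot0l mulr_ge0 // nrm_ge0.
have [y0|yn0] := eqVneq (nrm y) 0.
  have : dot y y = 0 by rewrite -nrm_sq y0 expr2 mul0r.
  by move/dotxx_eq0 => ->; rewrite dot0r mulr_ge0 // nrm_ge0.
have hx : 0 < nrm x by rewrite lt_def xn0 nrm_ge0.
have hy : 0 < nrm y by rewrite lt_def yn0 nrm_ge0.
have := dotxx_ge0 (nrm y *: x - nrm x *: y).
rewrite !dotBl !dotBr !dotZl !dotZr -!nrm_sq (dotC y x).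
set a := nrm x; set b := nrm y; set c := dot x y => h.
have hab : 0 < a * b by rewrite mulr_gt0.
have : a * b * c <= a * b * (a * b) by nra.
by rewrite ler_pM2l.
Qed.

Lemma nrm_tri x y : nrm (x + y) <= nrm x + nrm y.
Proof.
apply: nrm_le; first by rewrite addr_ge0 ?nrm_ge0.
rewrite !dotDl !dotDr -!nrm_sq (dotC y x).
have := CS x y; nra.
Qed.

Lemma absdot_le x e : dot e e <= 1 -> `|dot x e| <= nrm x.
Proof.
move=> he.
have ne : nrm e <= 1 by apply: nrm_le => //; rewrite expr1n.
have h1 := CS x e; have h2 := CS (- x) e; rewrite dotNl nrmN in h2.
have := nrm_ge0 x; have := nrm_ge0 e.
rewrite ler_norml; move=> e0 x0; apply/andP; split; nra.
Qed.

End Dot.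
Section GS.
Variables (R : realType) (d : nat).
Local Notation V := 'rV[R]_d.
Implicit Types (s : seq V) (x y : V).

Definition proj s x : V := \sum_(i < size s) dot x s`_i *: s`_i.

Definition ONZ s := (forall i k, (i < size s)%N -> (k < size s)%N -> i != k ->
   dot s`_i s`_k = 0) /\ (forall i, (i < size s)%N -> dot s`_i s`_i = 1 \/ s`_i = 0).

Lemma proj_dot s x i : ONZ s -> (i < size s)%N ->
  dot (proj s x) s`_i = dot x s`_i * dot s`_i s`_i.
Proof.
move=> [Ho _] hi; rewrite /proj dot_suml (bigD1 (Ordinal hi)) //= dotZl.
rewrite big1 ?addr0 // => k /eqP hk; rewrite dotZl Ho ?mulr0 //.
by apply/eqP => e; apply: hk; apply: val_inj.
Qed.

Lemma perp s x i : ONZ s -> (i < size s)%N -> dot (x - proj s x) s`_i = 0.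
Proof.
move=> hs hi; rewrite dotBl proj_dot //.
case: (hs.2 i hi) => [->|->]; first by rewrite mulr1 subrr.
by rewrite dot0r mul0r subrr.
Qed.

Lemma perp_span s x y : ONZ s -> dot (x - proj s x) (proj s y) = 0.
Proof.
move=> hs; rewrite /proj dot_sumr big1 // => i _.
by rewrite dotZr perp ?mulr0.
Qed.

Lemma projB s x y : proj s (x - y) = proj s x - proj s y.
Proof.
rewrite /proj -sumrB; apply: eq_bigr => i _; by rewrite dotBl scalerBl.
Qed.

Lemma proj_rcons s e x : proj (rcons s e) x = proj s x + dot x e *: e.
Proof.
rewrite /proj size_rcons big_ord_recr /= nth_rcons ltnn eqxx; congr (_ + _).
by apply: eq_bigr => i _; rewrite nth_rcons /= ltn_ord.
Qed.

Lemma nrm_comb s (c : nat -> R) : ONZ s ->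
  dot (\sum_(i < size s) c i *: s`_i) (\sum_(i < size s) c i *: s`_i)
  <= \sum_(i < size s) c i ^+ 2.
Proof.
move=> [Ho Hn]; rewrite dot_suml; apply: ler_sum => i _.
rewrite dotZl dot_sumr (bigD1 i) //= big1 ?addr0.
  rewrite dotZr; case: (Hn i (ltn_ord i)) => [->|->]; first by rewrite mulr1 expr2.
  by rewrite dot0r !mulr0 sqr_ge0.
move=> k /eqP hk; rewrite dotZr Ho ?mulr0 //.
by apply/eqP => e; apply: hk; apply: val_inj.
Qed.

Variable v : nat -> V.

Definition nz x : V := (nrm x)^-1 *: x.

Fixpoint gs n : seq V :=
  if n is n'.+1 then rcons (gs n') (nz (v n' - proj (gs n') (v n'))) else [::].

Lemma size_gs n : size (gs n) = n.
Proof. by elim: n => //= n IH; rewrite size_rcons IH. Qed.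

Lemma nz_prop x : dot (nz x) (nz x) = 1 \/ nz x = 0.
Proof.
have [x0|xn0] := eqVneq x 0; first by right; rewrite /nz x0 scaler0.
left; rewrite /nz dotZl dotZr -nrm_sq.
have : nrm x != 0.
  apply: contra xn0 => /eqP h; apply/eqP/dotxx_eq0; by rewrite -nrm_sq h expr2 mul0r.
move=> h; field; exact: h.
Qed.

Lemma nz_eq x : nrm x *: nz x = x.
Proof.
have [x0|xn0] := eqVneq (nrm x) 0.
  have : dot x x = 0 by rewrite -nrm_sq x0 expr2 mul0r.
  by move/dotxx_eq0 => ->; rewrite /nz !scaler0.
by rewrite /nz scalerA mulfV // scale1r.
Qed.

Lemma ONZ_gs n : ONZ (gs n).
Proof.
elim: n => [|n [IHo IHn]] /=; first by split.
set w := v n - proj (gs n) (v n).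
have orth : forall i, (i < n)%N -> dot (nz w) (gs n)`_i = 0.
  move=> i hi; rewrite /nz dotZl /w perp ?mulr0 // ?size_gs //; by split.
split.
- rewrite size_rcons size_gs => i k hi hk.
  rewrite !nth_rcons !size_gs.
  rewrite ltnS leq_eqVlt in hi; rewrite ltnS leq_eqVlt in hk.
  case/orP: hi => [/eqP ->|hi]; case/orP: hk => [/eqP ->|hk].
  + by rewrite eqxx.
  + by rewrite ltnn eqxx hk orth.
  + by rewrite ltnn eqxx hi dotC orth.
  + by rewrite hi hk; apply: IHo; rewrite ?size_gs.
- rewrite size_rcons size_gs => i hi; rewrite nth_rcons size_gs.
  rewrite ltnS leq_eqVlt in hi; case/orP: hi => [/eqP ->|hi].
  + by rewrite ltnn eqxx; apply: nz_prop.
  + by rewrite hi; apply: IHn; rewrite size_gs.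
Qed.

Lemma proj_ext s e x : ONZ (rcons s e) -> x = proj s x -> x = proj (rcons s e) x.
Proof.
move=> [Ho _] hx; rewrite proj_rcons.
suff -> : dot x e = 0 by rewrite scale0r addr0.
rewrite hx /proj dot_suml big1 // => i _; rewrite dotZl.
have := Ho i (size s); rewrite !nth_rcons ltnn eqxx size_rcons (ltn_ord i) ltnSn.
move=> ->; rewrite ?mulr0 //; first by rewrite ltnS ltnW.
by rewrite (ltn_eqF (ltn_ord i)).
Qed.

Lemma recon m n : (m < n)%N -> v m = proj (gs n) (v m).
Proof.
elim: n => // n IH; rewrite ltnS leq_eqVlt => /orP [/eqP ->|hmn].
  rewrite /= proj_rcons.
  set w := v n - proj (gs n) (v n).
  have hw : dot (v n) (nz w) = nrm w.
    have -> : v n = w + proj (gs n) (v n) by rewrite /w subrK.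
    rewrite dotDl /nz !dotZr [dot (proj _ _) _]dotC.
    have -> : dot w (proj (gs n) (v n)) = 0 by rewrite /w perp_span //; apply: ONZ_gs.
    rewrite mulr0 addr0 -nrm_sq.
    have [->|h] := eqVneq (nrm w) 0; first by rewrite invr0 mul0r.
    by field.
  by rewrite hw nz_eq /w addrC subrK.
by apply: proj_ext; [apply: (ONZ_gs n.+1) | apply: IH].
Qed.

Variable M : nat.
Definition LS x := exists c : nat -> R, x = \sum_(m < M) c m *: v m.

Lemma LS0 : LS 0.
Proof. by exists (fun _ => 0); rewrite big1 // => i _; rewrite scale0r. Qed.
Lemma LSD x y : LS x -> LS y -> LS (x + y).
Proof.
move=> [c ->] [c' ->]; exists (fun m => c m + c' m).
by rewrite -big_split; apply: eq_bigr => i _; rewrite scalerDl.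
Qed.
Lemma LSZ a x : LS x -> LS (a *: x).
Proof.
move=> [c ->]; exists (fun m => a * c m).
by rewrite scaler_sumr; apply: eq_bigr => i _; rewrite scalerA.
Qed.
Lemma LSN x : LS x -> LS (- x).
Proof. by move=> h; rewrite -scaleN1r; apply: LSZ. Qed.
Lemma LSsum (I : Type) (r : seq I) (F : I -> V) :
  (forall i, LS (F i)) -> LS (\sum_(i <- r) F i).
Proof. by move=> h; elim/big_rec: _ => [|i x _ hx]; [apply: LS0|apply: LSD]. Qed.
Lemma LSv m : (m < M)%N -> LS (v m).
Proof.
move=> hm; exists (fun k => if k == m then 1 else 0).
rewrite (bigD1 (Ordinal hm)) //= eqxx scale1r big1 ?addr0 // => i hi.
by rewrite ifF ?scale0r //; apply/negbTE; apply: contra hi => /eqP e; apply/eqP/val_inj.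
Qed.

Lemma LS_gs n i : (n <= M)%N -> LS (gs n)`_i.
Proof.
elim: n i => [|n IH] i hn /=; first by rewrite nth_nil; apply: LS0.
rewrite nth_rcons; case: ifP => _; first by apply: IH; exact: ltnW.
case: ifP => _; last by apply: LS0.
apply: LSZ; apply: LSD; first by apply: LSv.
apply: LSN; apply: LSsum => k; apply: LSZ; apply: IH; exact: ltnW.
Qed.

End GS.
Section Proj.
Variables (R : realType) (d k : nat) (os : 'I_k.+1 -> 'rV[R]_d).
Local Notation V := 'rV[R]_d.
Local Notation j := k.+1.

Definition o0 := os ord0.
Definition vv (m : nat) : V := if (m < j)%N then os (inord m) - o0 else 0.
Definition EE := gs vv j.
Definition pr (x : V) : V := o0 + proj EE (x - o0).

Lemma ONZ_EE : ONZ EE.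
Proof. exact: ONZ_gs. Qed.
Lemma size_EE : size EE = j.
Proof. exact: size_gs. Qed.

Lemma vv_os (l : 'I_j) : vv l = os l - o0.
Proof. by rewrite /vv ltn_ord inord_val. Qed.

Lemma os_span (l : 'I_j) : os l - o0 = proj EE (os l - o0).
Proof. by rewrite -vv_os; apply: recon. Qed.

Lemma pr_sub x (l : 'I_j) : pr x - os l = proj EE (x - os l).
Proof.
rewrite (_ : x - os l = (x - o0) - (os l - o0)); last by rewrite opprB addrA subrK.
by rewrite projB -os_span /pr opprB addrA [o0 + _]addrC.
Qed.

Lemma pr_orth x (l : 'I_j) : dot (x - pr x) (pr x - os l) = 0.
Proof.
rewrite (_ : x - pr x = (x - os l) - (pr x - os l)); last by rewrite opprB addrA subrK.
by rewrite !pr_sub perp_span //; apply: ONZ_EE.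
Qed.

Lemma subr_trans (a b c : V) : a - b + (b - c) = a - c.
Proof. by rewrite addrA subrK. Qed.

Lemma pyth_gen (a b : V) : dot a b = 0 -> dot (a + b) (a + b) = dot a a + dot b b.
Proof. by move=> h; rewrite !dotDl !dotDr h (dotC b a) h addr0 add0r. Qed.

Lemma clust_gen (a b c : V) L : dot a b = 0 -> dot c c <= L ^+ 2 -> 0 <= L ->
  dot (b + c) (b + c) <= (nrm (a + b + c) + L) ^+ 2.
Proof.
move=> hab hc L0.
have hac := dotxx_ge0 (a + c).
have hn := nrm_ge0 (a + b + c).
have hsq := nrm_sq (a + b + c).
move: hsq hac hn; set X := nrm _.
rewrite !dotDl !dotDr (dotC b a) hab (dotC c a) (dotC c b); nra.
Qed.

Lemma pyth x (l : 'I_j) :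
  nrm (x - os l) ^+ 2 = nrm (x - pr x) ^+ 2 + nrm (pr x - os l) ^+ 2.
Proof.
rewrite !nrm_sq (_ : x - os l = (x - pr x) + (pr x - os l)); last by rewrite addrA subrK.
by rewrite (@pyth_gen (x - pr x) (pr x - os l)) // pr_orth.
Qed.

Lemma pr_le1 x (l : 'I_j) : nrm (pr x - os l) <= nrm (x - os l).
Proof.
apply: nrm_le; first exact: nrm_ge0.
rewrite -nrm_sq (pyth x l); have := sqr_ge0 (nrm (x - pr x)); lra.
Qed.

Lemma pr_le2 x (l : 'I_j) : nrm (x - pr x) <= nrm (x - os l).
Proof.
apply: nrm_le; first exact: nrm_ge0.
rewrite -nrm_sq (pyth x l); have := sqr_ge0 (nrm (pr x - os l)); lra.
Qed.

Lemma pr_clust x (l : 'I_j) p L : nrm (p - os l) <= L ->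
  nrm (pr x - p) <= nrm (p - x) + L.
Proof.
move=> hL.
have L0 : 0 <= L by apply: le_trans hL; apply: nrm_ge0.
apply: nrm_le; first by rewrite addr_ge0 // nrm_ge0.
have e1 : pr x - p = (pr x - os l) + (os l - p) by rewrite subr_trans.
have e2 : nrm (p - x) = nrm ((x - pr x) + (pr x - os l) + (os l - p)).
  by rewrite nrmB !subr_trans.
rewrite e1 e2; apply: clust_gen => //; first exact: pr_orth.
by rewrite -nrm_sq nrmB lerXn2r // ?nnegrE ?nrm_ge0.
Qed.

End Proj.
Section Grid.
Variables (R : realType) (d k : nat) (os : 'I_k.+1 -> 'rV[R]_d).
Local Notation V := 'rV[R]_d.
Local Notation j := k.+1.
Local Notation EE := (EE os).
Local Notation o0 := (o0 os).

Lemma aff_of_LS (y : V) : LS (vv os) j (y - o0) -> in_affine_span os y.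
Proof.
move=> [c h].
exists (fun l : 'I_j => c l + (if l == ord0 then 1 - \sum_(m < j) c m else 0)).
have hd : forall (F : 'I_j -> V) t, \sum_(l < j) (if l == ord0 then t else 0) *: F l = t *: F ord0.
  move=> F t; rewrite (bigD1 ord0) // eqxx big1 /= ?addr0 // => i /negbTE ->.
  by rewrite scale0r.
split.
  have hd' : forall t : R, \sum_(l < j) (if l == ord0 then t else 0) = t.
    by move=> t; rewrite (bigD1 ord0) // eqxx big1 /= ?addr0 // => i /negbTE ->.
  by rewrite big_split /= hd' addrC subrK.
under eq_bigr do rewrite scalerDl.
rewrite big_split /= hd -[y](subrK o0) h.
rewrite (eq_bigr (fun m : 'I_j => c m *: (os m - o0))); last by move=> m _; rewrite vv_os.
under eq_bigr do rewrite scalerBr.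
rewrite sumrB -scaler_suml scalerBl scale1r.
by rewrite /o0 addrA addrAC.
Qed.

Definition AA : R := 20.
Definition BB : R := 10.
Definition sig (L : R) (l : 'I_j) (sc : option 'I_j) : R :=
  if sc is Some l' then nrm (os l - os l') else L.
Definition NN (eps : R) : nat := (Num.truncn (AA * BB * j%:R / eps)).+1.
Definition hh (L eps : R) l sc : R := eps * sig L l sc / (BB * j%:R).
Definition GT (eps : R) := ('I_j * option 'I_j * {ffun 'I_j -> 'I_(NN eps).*2.+1})%type.
Definition gp (L eps : R) (x : GT eps) : V :=
  let: (l, sc, z) := x in
  os l + \sum_(i < j) (hh L eps l sc * ((z i)%:R - (NN eps)%:R)) *: EE`_i.
Arguments gp : clear implicits.
Definition mkGrid (L eps : R) : {fset V} := [fset gp L eps x | x : GT eps]%fset.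

Lemma mkGrid_aff L eps g : g \in mkGrid L eps -> in_affine_span os g.
Proof.
move=> /imfsetP [[[l sc] z] _ ->] /=; apply: aff_of_LS.
rewrite addrAC; apply: LSD; first by rewrite -vv_os; apply: LSv.
apply: LSsum => i; apply: LSZ; exact: LS_gs.
Qed.

Lemma mkGrid_card L eps : (#|` mkGrid L eps| <= j * j.+1 * (NN eps).*2.+1 ^ j)%N.
Proof.
apply: leq_trans (leq_imfset_card _ _ _) _.
rewrite /enum_finmem /= -cardE !card_prod card_option card_ffun !card_ord.
done.
Qed.

End Grid.
Section Card.
Variables (R : realType) (k : nat).
Local Notation j := k.+1.

Definition CC : R := 2 * 401 ^+ j.

Lemma card_bound (eps : R) : 0 < eps -> eps < 1 / 5 ->
  ((j * j.+1 * (NN k eps).*2.+1 ^ j)%N)%:R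
    <= CC * (j ^ 2)%:R * ((j%:R * Num.sqrt j%:R) / eps) ^+ j.
Proof.
move=> e0 e5.
set J : R := j%:R.
have J1 : 1 <= J by rewrite /J ler1n.
have sJ : 1 <= Num.sqrt J by rewrite -sqrtr1 ler_sqrt.
set y := J * Num.sqrt J / eps.
have Jy : J / eps <= y.
  by rewrite /y ler_pM2r ?invr_gt0 // ler_peMr // ?(le_trans ler01).
have J5 : 5 <= J / eps.
  rewrite ler_pdivlMr //; have : 5 * eps <= 1 by lra. lra.
have hN : ((NN k eps).*2.+1)%:R <= 401 * y.
  have eT : AA R * BB R * J / eps = 200 * (J / eps) by rewrite /AA /BB; ring.
  have T0 : 0 <= AA R * BB R * J / eps by rewrite eT; lra.
  have := truncn_le (AA R * BB R * J / eps); rewrite T0 eT => ht.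
  rewrite /NN eT -addn1 natrD -muln2 natrM -addn1 natrD.
  lra.
have y0 : 0 <= y by apply: le_trans Jy; lra.
have h1 : ((NN k eps).*2.+1 ^ j)%:R <= 401 ^+ j * y ^+ j.
  rewrite natrX -exprMn; apply: lerXn2r => //; rewrite nnegrE //.
  by rewrite mulr_ge0.
have h2 : ((j * j.+1)%N)%:R <= 2 * ((j ^ 2)%N)%:R :> R.
  rewrite -natrM ler_nat -mulnn; nia.
rewrite natrM /CC.
apply: le_trans (ler_pM _ _ h2 h1) _; rewrite ?ler0n //.
by rewrite le_eqVlt; apply/orP; left; apply/eqP; ring.
Qed.
End Card.
Section Round.
Variables (R : realType) (d k : nat) (os : 'I_k.+1 -> 'rV[R]_d).
Local Notation V := 'rV[R]_d.
Local Notation j := k.+1.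
Local Notation EE := (EE os).

Lemma proj_EE x : proj EE x = \sum_(i < j) dot x EE`_i *: EE`_i.
Proof. by rewrite /proj size_EE. Qed.

Lemma EE_le1 (i : nat) : dot EE`_i EE`_i <= 1.
Proof.
have [hi|hi] := ltnP i (size EE).
  by case: ((ONZ_EE os).2 i hi) => [->|->]; rewrite ?dot0l.
by rewrite nth_default // dot0l.
Qed.

Lemma fin_ineq (J h : R) : 1 <= J -> h ^+ 2 * J <= (J * h) ^+ 2.
Proof.
move=> J1; rewrite exprMn mulrC.
have JJ : J <= J ^+ 2 by rewrite expr2; nra.
by apply: ler_wpM2r => //; apply: sqr_ge0.
Qed.

Lemma rounding (L eps : R) (x : V) (l : 'I_j) sc : 0 < eps -> 0 <= sig os L l sc ->
  nrm (pr os x - os l) <= AA R * sig os L l sc ->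
  exists z : {ffun 'I_j -> 'I_(NN k eps).*2.+1},
    nrm (gp os L (l, sc, z) - pr os x) <= eps * sig os L l sc / BB R.
Proof.
move=> e0 s0 hpl.
set s := sig os L l sc.
set h := hh os L eps l sc.
set N := NN k eps.
set J : R := j%:R.
have J1 : 1 <= J by rewrite /J ler1n.
have eh : h = eps * s / (BB R * J) by [].
have h0 : 0 <= h by rewrite eh /BB divr_ge0 ?mulr_ge0 //; lra.
set a := fun m : nat => dot (x - os l) EE`_m.
have hpi : pr os x - os l = \sum_(i < j) a i *: EE`_i by rewrite pr_sub proj_EE.
have ha : forall m, `|a m| <= AA R * s.
  move=> m; apply: le_trans hpl.
  have [hm|hm] := ltnP m (size EE); last by rewrite /a nth_default // dot0r normr0 nrm_ge0.
  have -> : a m = dot (pr os x - os l) EE`_m + dot (x - pr os x) EE`_m.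
    by rewrite -dotDl addrC subr_trans.
  have -> : dot (x - pr os x) EE`_m = 0.
    have -> : x - pr os x = (x - os l) - (pr os x - os l) by rewrite opprB addrA subrK.
    by rewrite pr_sub perp //; apply: ONZ_EE.
  by rewrite addr0; apply: absdot_le; apply: EE_le1.
set T := AA R * BB R * J / eps.
have hT : T < N%:R by rewrite /N /NN truncnS_gt.
have T0 : 0 <= T by rewrite /T /AA /BB divr_ge0 ?mulr_ge0 //; lra.
set t := fun m : nat => Num.truncn (a m / h + N%:R).
have ht : forall m, (t m <= N.*2)%N /\ (h = 0 \/ (h * (t m)%:R <= a m + h * N%:R < h * (t m)%:R + h)).
  move=> m.
  have [hz|hpos] := eqVneq h 0.
    rewrite /t hz invr0 mulr0 add0r natrK -addnn leq_addr; split => //; by left.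
  have hp : 0 < h by rewrite lt_def hpos h0.
  have hs : 0 < s.
    rewrite lt_def s0 andbT; apply: contra hpos => /eqP hs0.
    by rewrite eh hs0 mulr0 mul0r.
  have haT : `|a m / h| <= T.
    rewrite normrM normfV (gtr0_norm hp) ler_pdivrMr // eh /T.
    apply: le_trans (ha m) _; rewrite le_eqVlt; apply/orP; left; apply/eqP.
    rewrite /AA /BB; field.
    by apply/andP; split; [lra|]; rewrite ?lt0r_neq0 // ?lt_def; apply/andP; split; lra.
  have := haT; rewrite ler_norml => /andP [hl hr].
  have r0 : 0 <= a m / h + N%:R by lra.
  have := truncn_itv r0; rewrite -/(t m) => /andP [t1 t2].
  split.
    rewrite -(ler_nat R) -addnn natrD; apply: ltW; apply: le_lt_trans t1 _.
    lra.
  right.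
  have aq : a m = (a m / h) * h by rewrite divfK ?lt0r_neq0.
  move: t1 t2; rewrite {3 4}aq; set q := a m / h; set tt := (t m)%:R => t1 t2.
  apply/andP; split; nra.
  exists [ffun i : 'I_j => (inord (t i) : 'I_N.*2.+1)].
  set z := [ffun i : 'I_j => (inord (t i) : 'I_N.*2.+1)].
  have hz : forall i : 'I_j, (z i : nat) = t i.
    by move=> i; rewrite ffunE inordK // ltnS; case: (ht i).
  set c := fun m : nat => h * ((t m)%:R - N%:R) - a m.
  have -> : gp os L (l, sc, z) - pr os x = \sum_(i < size EE) c i *: EE`_i.
    rewrite /gp /= -[pr os x](subrK (os l)) hpi.
    rewrite [_ + os l]addrC opprD addrACA subrr add0r -sumrB size_EE.
    by apply: eq_bigr => i _; rewrite -scalerBl hz.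
  apply: nrm_le.
    by apply: divr_ge0; [apply: mulr_ge0; [exact: ltW e0|exact: s0] | rewrite /BB ler0n].
  apply: le_trans (nrm_comb _ (ONZ_EE os)) _.
  apply: (@le_trans _ _ (\sum_(i < size EE) h ^+ 2)).
    apply: ler_sum => i _; rewrite /c.
    case: (ht i) => _ [hz0|/andP [u1 u2]].
      have hs : s = 0.
        move: eh; rewrite hz0 => /esym /eqP; rewrite !mulf_eq0 invr_eq0 !mulf_eq0.
        rewrite /BB /J /=; case/orP => [/orP [/eqP e|/eqP //]|]; [by move: e0; rewrite e ltxx|by rewrite !pnatr_eq0].
      have : a i = 0.
        by apply/eqP; rewrite -normr_eq0 eq_le normr_ge0 andbT; move: (ha i); rewrite hs mulr0.
      by move=> ->; rewrite hz0 mul0r subr0 expr0n.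
    have -> : h * ((t i)%:R - N%:R) - a i = - ((a i + h * N%:R) - h * (t i)%:R) by rewrite mulrBr; ring.
    rewrite sqrrN; set q := (a i + _ - _); have q0 : 0 <= q by rewrite /q subr_ge0.
    have q1 : q <= h by rewrite /q lerBlDl ltW.
    by rewrite lerXn2r // nnegrE.
  rewrite sumr_const card_ord -mulr_natr size_EE -/J.
  have -> : eps * s / BB R = J * h by rewrite eh; field; rewrite addrC natr1 pnatr_eq0.
  exact: fin_ineq.
Qed.
End Round.
Lemma argmin_ex (R : realType) (T : finType) (P : pred T) (f : T -> R) x0 :
  P x0 -> exists x, P x /\ forall y, P y -> f x <= f y.
Proof.
move=> Px0; case: (arg_minP f Px0) => x Px H.
by exists x; split.
Qed.

Definition ind (R : realType) (b : bool) : R := if b then 1 else 0.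

Lemma ind_ge0 (R : realType) b : 0 <= ind R b.
Proof. by rewrite /ind; case: b. Qed.

Section Main.
Variables (R : realType) (d k : nat) (os : 'I_k.+1 -> 'rV[R]_d).
Local Notation V := 'rV[R]_d.
Local Notation j := k.+1.
Variables (L eps : R) (P : {fset V}) (Ps : 'I_j -> {fset V}) (o : V).
Hypotheses (e0 : 0 < eps) (e5 : eps < 1 / 5) (L0 : 0 <= L).
Hypothesis hsub : forall l, fsubset (Ps l) P.
Hypothesis hne : forall l, Ps l != fset0.
Hypothesis hmed : is_median P o.
Hypothesis hcnt : (#|` [fset p in P | [forall l : 'I_j, p \notin Ps l]]%fset |)%:R
            <= eps * (#|` P |)%:R.
Hypothesis hL : forall l p, p \in Ps l -> eucl (p - os l) <= L.

Definition isout (p : V) : bool := [forall l : 'I_j, p \notin Ps l].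
Local Notation nR := ((#|` P|)%:R : R).
Local Notation X := (\sum_(p <- P) nrm (p - o)).
Local Notation Sout := (\sum_(p <- P) ind R (isout p)).
Local Notation Sc := (\sum_(p <- P) ind R (~~ isout p)).

Lemma clustered p : ~~ isout p -> exists l, p \in Ps l.
Proof. by move/forallPn => [l /negPn hl]; exists l. Qed.

Lemma nR_split : nR = Sout + Sc.
Proof.
rewrite card_fset_sum1 natr_sum -big_split /=; apply: eq_bigr => p _.
by rewrite /ind; case: (isout p); rewrite ?addr0 ?add0r.
Qed.

Lemma Sout_le : Sout <= eps * nR.
Proof.
apply: le_trans hcnt; rewrite card_fset_sum1 -big_fset_condE natr_sum big_mkcond /=.
rewrite [X in _ <= X]big_mkcond /=; apply: ler_sum => p _; rewrite /ind /isout; case: ifP => //.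
Qed.

Lemma nR_gt0 : 0 < nR.
Proof.
have := hne ord0; case/fset0Pn => p hp.
have hpP : p \in P by move/fsubsetP: (hsub ord0); apply.
by rewrite ltr0n cardfs_gt0; apply/fset0Pn; exists p.
Qed.

Lemma X_ge0 : 0 <= X.
Proof. by apply: sumr_ge0 => p _; apply: nrm_ge0. Qed.

Lemma Sc_gt0 : 0 < Sc.
Proof.
have := nR_split; have := Sout_le; have := nR_gt0 => h0.
have E5 := e5.
have : eps * nR < nR by rewrite -[X in _ < X]mul1r ltr_pM2r //; lra.
lra.
Qed.

Lemma sum_le (F G : V -> R) : (forall p, F p <= G p) ->
  \sum_(p <- P) F p <= \sum_(p <- P) G p.
Proof. by move=> h; apply: ler_sum => p _; apply: h. Qed.

Lemma mainsum : \sum_(p <- P) nrm (pr os o - p) <= X + 5 / 4 * eps * X + nR * L.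
Proof.
set pi := pr os o; set w := nrm (o - pi).
have pw1 : forall p, nrm (pi - p) <= nrm (p - o) + ind R (isout p) * w + ind R (~~ isout p) * L.
  move=> p; case hp: (isout p); rewrite /ind /=.
    rewrite mul1r mul0r addr0 /w -(subr_trans pi o p) (nrmB p o) (nrmB o pi).
    by rewrite [X in _ <= X]addrC; apply: nrm_tri.
  have [l hl] := clustered (negbT hp).
  rewrite mul1r mul0r addr0; apply: pr_clust; exact: hL hl.
have pw2 : forall p, ind R (~~ isout p) * w <= nrm (p - o) + ind R (~~ isout p) * L.
  move=> p; case hp: (isout p); rewrite /ind /=.
    by rewrite !mul0r addr0 nrm_ge0.
  have [l hl] := clustered (negbT hp).
  rewrite !mul1r; apply: le_trans (pr_le2 os o l) _.
  rewrite -(subr_trans o p (os l)) nrmB; apply: le_trans (nrm_tri _ _) _.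
  by rewrite nrmB lerD2l; apply: hL.
have S1 : \sum_(p <- P) nrm (pi - p) <= X + Sout * w + Sc * L.
  apply: le_trans (sum_le pw1) _; rewrite !big_split /= -!mulr_suml //.
have S2 : Sc * w <= X + Sc * L.
  rewrite mulr_suml; apply: le_trans (sum_le pw2) _; rewrite big_split /= -mulr_suml //.
have E5 := e5; have E0 := e0; have LL := L0.
have hn := nR_split; have hs := Sout_le; have hc := Sc_gt0; have hX := X_ge0.
have hw : 0 <= w by apply: nrm_ge0.
have hS0 : 0 <= Sout by apply: sumr_ge0 => p _; apply: ind_ge0.
apply: le_trans S1 _.
have h4 : 4 * Sout <= 5 * eps * Sc.
  have : eps * Sout <= 1 / 5 * Sout by apply: ler_wpM2r => //; apply: ltW.
  move: hs; rewrite hn mulrDr; lra.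
have A1 : Sc * (Sout * w) <= Sc * (5 / 4 * eps * X + Sout * L).
  have : Sout * (Sc * w) <= Sout * (X + Sc * L) by apply: ler_wpM2l.
  have : 4 * Sout * X <= 5 * eps * Sc * X by apply: ler_wpM2r.
  nra.
rewrite ler_pM2l // in A1.
rewrite hn; lra.
Qed.

Lemma sum_const c : \sum_(p <- P) c = nR * c.
Proof.
by rewrite card_fset_sum1 natr_sum mulr_suml; apply: eq_bigr => p _; rewrite mul1r.
Qed.

Lemma sum_indM (b : V -> bool) c : \sum_(p <- P) ind R (b p) * c = (\sum_(p <- P) ind R (b p)) * c.
Proof. by rewrite mulr_suml. Qed.

Lemma scale : exists l0 sc,
  [/\ 0 <= sig os L l0 sc, nrm (pr os o - os l0) <= AA R * sig os L l0 sc
    & sig os L l0 sc * nR <= BB R * (X + nR * L)].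
Proof.
have E5 := e5; have E0 := e0; have LL := L0.
have hn := nR_split; have hs := Sout_le; have hX := X_ge0; have hnp := nR_gt0.
have hS0 : 0 <= Sout by apply: sumr_ge0 => p _; apply: ind_ge0.
have hSc := Sc_gt0.
have [l0 [_ hmin]] := @argmin_ex R _ predT (fun l : 'I_j => nrm (o - os l)) ord0 isT.
set dl := nrm (o - os l0).
have hpi : nrm (pr os o - os l0) <= dl by apply: pr_le1.
have D1 : Sc * (dl - L) <= X.
  rewrite -sum_indM; apply: sum_le => p; case hp: (isout p); rewrite /ind /=.
    by rewrite mul0r nrm_ge0.
  have [l hl] := clustered (negbT hp).
  rewrite mul1r; have := hmin l isT; rewrite -/dl => h1.
  have h2 : nrm (o - os l) <= nrm (p - o) + nrm (p - os l).
    by rewrite -(subr_trans o p (os l)) (nrmB p o); apply: nrm_tri.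
  have := hL hl; rewrite -/(nrm _); lra.
have hdl0 : 0 <= dl by apply: nrm_ge0.
have eSout : eps * nR <= 1 / 5 * nR by apply: ler_wpM2r; apply: ltW.
case: (lerP dl (AA R * L)) => hcase.
  exists l0, None; split => //=; first by apply: le_trans hcase.
  rewrite /BB; nra.
pose near (l : 'I_j) := nrm (os l0 - os l) < dl / AA R.
pose nearp (p : V) := [exists l, near l && (p \in Ps l)].
have hLd : L < dl / 20 by move: hcase; rewrite /AA; lra.
have hdp : 0 < dl by lra.
have nearp_in : forall p, nearp p -> ~~ isout p.
  move=> p /existsP [l /andP [_ hl]]; apply/forallPn; exists l; by rewrite negbK.
have pw3 : forall p, nrm (p - os l0) <= nrm (p - o) + dl - ind R (nearp p) * ((2 - 4 / 20) * dl).
  move=> p; case hp: (nearp p); rewrite /ind /=.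
    move: hp => /existsP [l /andP [hnl hl]].
    have a1 : nrm (p - os l0) <= nrm (p - os l) + nrm (os l0 - os l).
      by rewrite -(subr_trans p (os l) (os l0)) (nrmB (os l0) (os l)); apply: nrm_tri.
    have a2 : dl <= nrm (p - o) + nrm (p - os l0).
      by rewrite /dl -(subr_trans o p (os l0)) (nrmB p o); apply: nrm_tri.
    have := hL hl; rewrite -/(nrm _) => a3.
    move: hnl; rewrite /near /AA => a4.
    lra.
  rewrite mul0r subr0 -(subr_trans p o (os l0)); apply: nrm_tri.
set Sn := \sum_(p <- P) ind R (nearp p).
have hmed' : X <= \sum_(p <- P) nrm (p - os l0) by apply: hmed.
have hSn : Sn * (9 / 5) <= nR.
  have := le_trans hmed' (sum_le pw3).
  rewrite sumrB big_split /= sum_const sum_indM -/Sn => h.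
  have : Sn * ((2 - 4 / 20) * dl) <= nR * dl by lra.
  rewrite (_ : (2 - 4 / 20) * dl = 9 / 5 * dl); last by lra.
  by rewrite mulrA ler_pM2r.
have hfar : exists l, ~~ near l.
  case: (boolP [exists l, ~~ near l]) => [/existsP //|/existsPn hall].
  have : Sc <= Sn.
    apply: sum_le => p; case hp: (isout p); rewrite /ind /=; first by case: (nearp p).
    have [l hl] := clustered (negbT hp).
    suff -> : nearp p by [].
    by apply/existsP; exists l; rewrite hl andbT; move: (hall l); rewrite negbK.
  move=> hScSn; exfalso; lra.
case: hfar => lf hlf.
have [l1 [hl1 hmin1]] := @argmin_ex R _ [pred l | ~~ near l] (fun l : 'I_j => nrm (os l0 - os l)) lf hlf.
set sg := nrm (os l0 - os l1).
have hsg0 : 0 <= sg by apply: nrm_ge0.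
have hsg : dl <= AA R * sg.
  move: hl1; rewrite /= /near -/sg /AA -leNgt => h; lra.
exists l0, (Some l1); split => //=; first by apply: le_trans hsg.
rewrite -/sg.
pose farp (p : V) := ~~ isout p && ~~ nearp p.
set Sf := \sum_(p <- P) ind R (farp p).
have hpart : nR = Sout + Sn + Sf.
  rewrite card_fset_sum1 natr_sum -!big_split /=; apply: eq_bigr => p _.
  rewrite /farp /ind; case hp: (isout p) => /=.
    case hq: (nearp p) => //=; last by rewrite !addr0.
    by move: (nearp_in p hq); rewrite hp.
  by case: (nearp p); rewrite ?add0r ?addr0.
have pw4 : forall p, ind R (farp p) * (sg - dl - dl / 20) <= nrm (p - o).
  move=> p; rewrite /farp; case hp: (isout p); rewrite /ind /=; first by rewrite mul0r nrm_ge0.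
  case hq: (nearp p) => /=; first by rewrite mul0r nrm_ge0.
  have [l hl] := clustered (negbT hp).
  have hnl : ~~ near l.
    apply: contraFN hq => hnl; apply/existsP; exists l; by rewrite hnl hl.
  have b1 := hmin1 l hnl; rewrite /= -/sg in b1.
  have b2 : nrm (os l0 - os l) <= nrm (o - os l0) + nrm (p - o) + nrm (p - os l).
    rewrite -(subr_trans (os l0) o (os l)).
    apply: le_trans (nrm_tri _ _) _; rewrite (nrmB (os l0) o) -addrA lerD2l.
    rewrite -(subr_trans o p (os l)) (nrmB p o); exact: nrm_tri.
  have := hL hl; rewrite -/(nrm _) -/dl in b2 * => b3.
  rewrite mul1r; lra.
have D2 : Sf * (sg - dl - dl / 20) <= X by rewrite -sum_indM; apply: sum_le.
have hSf : 11 / 45 * nR <= Sf by lra.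
have hSc8 : 4 / 5 * nR <= Sc by lra.
have D3 : 19 / 25 * nR * dl <= X.
  have : 4 / 5 * nR * (dl - L) <= Sc * (dl - L) by apply: ler_wpM2r; lra.
  have : 19 / 20 * dl <= dl - L by lra.
  move=> h1 h2; have : 4 / 5 * nR * (19 / 20 * dl) <= 4 / 5 * nR * (dl - L).
    by apply: ler_wpM2l; lra.
  lra.
rewrite /BB; case: (lerP sg (21 / 10 * dl)) => hc.
  have : sg * nR <= 21 / 10 * dl * nR by apply: ler_wpM2r; lra.
  have : 0 <= nR * L by apply: mulr_ge0; lra.
  lra.
have : 11 / 45 * nR * (sg - dl - dl / 20) <= Sf * (sg - dl - dl / 20).
  by apply: ler_wpM2r; lra.
have : 0 <= nR * L by apply: mulr_ge0; lra.
nra.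
Qed.

End Main.

Theorem lemma10 (R : realType) (j : nat) (hj : (0 < j)%N) :
  exists C : R, 0 < C /\
  exists Grid : forall d : nat, ('I_j -> 'rV[R]_d) -> R -> R -> {fset 'rV[R]_d},
  forall (d : nat) (os : 'I_j -> 'rV[R]_d) (L eps : R),
    0 < eps -> eps < 1 / 5 -> 0 <= L ->
    [/\ (#|` Grid d os L eps |)%:R
          <= C * (j ^ 2)%:R * ((j%:R * Num.sqrt j%:R) / eps) ^+ j,
        (forall g, g \in Grid d os L eps -> in_affine_span os g)
      & forall (P : {fset 'rV[R]_d}) (Ps : 'I_j -> {fset 'rV[R]_d}) (o : 'rV[R]_d),
          (forall l, fsubset (Ps l) P) ->
          (forall l, Ps l != fset0) ->
          (forall l l', l != l' -> [disjoint Ps l & Ps l']%fset) ->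
          (forall l, is_median (Ps l) (os l)) ->
          is_median P o ->
          (#|` [fset p in P | [forall l : 'I_j, p \notin Ps l]]%fset |)%:R
            <= eps * (#|` P |)%:R ->
          (forall l p, p \in Ps l -> eucl (p - os l) <= L) ->
          exists2 tau, tau \in Grid d os L eps &
            (#|` P |)%:R^-1 * \sum_(p <- P) eucl (tau - p)
              <= (1 + 9 / 4 * eps) * ((#|` P |)%:R^-1 * \sum_(p <- P) eucl (p - o))
                 + (1 + eps) * L ].
Proof.
case: j hj => [//|k] _.
exists (CC R k); split; first by rewrite /CC mulr_gt0 // exprn_gt0.
exists (fun d os L eps => mkGrid os L eps).
move=> d os L eps e0 e5 L0; split.
- apply: le_trans _ (@card_bound R k eps e0 e5); rewrite ler_nat; exact: mkGrid_card.
- exact: mkGrid_aff.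
move=> P Ps o hsub hne hdisj hmedPs hmed hcnt hL.
have [l0 [sc [hs0 hpl hsc]]] := scale e0 e5 L0 hsub hne hmed hcnt hL.
have [z hz] := rounding e0 hs0 hpl.
set tau := gp os L (l0, sc, z).
exists tau; first by apply/imfsetP; exists (l0, sc, z).
have M := mainsum o e0 e5 L0 hsub hne hcnt hL.
have hnp := nR_gt0 hsub hne.
set nR := (#|` P|)%:R : R in M hsc hnp *.
set X := \sum_(p <- P) nrm (p - o) in M hsc *.
set pi := pr os o in M hz.
have T1 : \sum_(p <- P) nrm (tau - p) <= \sum_(p <- P) nrm (pi - p) + nR * nrm (tau - pi).
  rewrite /nR -sum_const -big_split /=; apply: ler_sum => p _.
  by rewrite -(subr_trans tau pi p) addrC; apply: nrm_tri.
have T2 : nR * nrm (tau - pi) <= eps * (X + nR * L).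
  have : nR * nrm (tau - pi) <= nR * (eps * sig os L l0 sc / BB R) by apply: ler_wpM2l => //; apply: ltW.
  have : eps * (sig os L l0 sc * nR) <= eps * (BB R * (X + nR * L)) by apply: ler_wpM2l => //; apply: ltW.
  rewrite /BB => h1 h2; apply: le_trans h2 _.
  nra.
have T3 : \sum_(p <- P) nrm (tau - p) <= (1 + 9 / 4 * eps) * X + (1 + eps) * L * nR.
  have E0 := e0; lra.
have hX : 0 <= X by apply: sumr_ge0 => p _; apply: nrm_ge0.
have -> : (1 + 9 / 4 * eps) * (nR^-1 * X) + (1 + eps) * L =
          nR^-1 * ((1 + 9 / 4 * eps) * X + (1 + eps) * L * nR).
  by field; rewrite lt0r_neq0.
apply: ler_wpM2l; first by rewrite invr_ge0 ltW.
exact: T3.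
Qed.
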